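(* Let the observer be at $(1,0,0)$ and let $r=1$. For $\ell\ge 1$ let $R_\ell$ be the rectangle in the plane $x=0$ with vertices $(0,y_i,z_j)$, $i,j\in\{1,2\}$, where $$y_{1,2}=\frac{r}{\sqrt2}\mp\frac{\ell}{2},\qquad z_{1,2}=\frac{r}{\sqrt2}\mp\frac{1}{2\ell},$$ i.e. the rectangle of area $1$, sides $\ell$ (parallel to the $y$-axis) and $1/\ell$ (parallel to the $z$-axis), centered at $(0,r/\sqrt2,r/\sqrt2)$. Let $\Omega(\ell)$ be the solid angle subtended by $R_\ell$ at the observer. Then the maximum of $\Omega(\ell)$ over $\ell\ge1$ is attained at $\ell=1$ (the square).
   Context: The solid angle subtended at a point $P$ by a planar region $S$ is the area of the radial projection of $S$ onto the unit sphere centered at $P$. For an observer at $(x_0,0,0)$ with $x_0>0$ and the rectangle above, it equals $F(y_2,z_2)-F(y_1,z_2)-F(y_2,z_1)+F(y_1,z_1)$ where $F(y,z)=\arctan\!\big(yz/(x_0\sqrt{x_0^2+y^2+z^2})\big)$. *)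

(* Defs.v *)
From Stdlib Require Import Reals Lra.
Open Scope R_scope.

Definition solidF (x0 y z : R) : R :=
  atan (y * z / (x0 * sqrt (x0 ^ 2 + y ^ 2 + z ^ 2))).

(* Solid angle subtended at (x0,0,0) by the rectangle
   {0} x [y1,y2] x [z1,z2] in the plane x = 0. *)
Definition solid_angle_rect (x0 y1 y2 z1 z2 : R) : R :=
  solidF x0 y2 z2 - solidF x0 y1 z2 - solidF x0 y2 z1 + solidF x0 y1 z1.

Definition r0 : R := 1.

Definition Omega (l : R) : R :=
  solid_angle_rect 1
    (r0 / sqrt 2 - l / 2) (r0 / sqrt 2 + l / 2)
    (r0 / sqrt 2 - 1 / (2 * l)) (r0 / sqrt 2 + 1 / (2 * l)).

(* Main.v *)
Require Import Defs.
From Stdlib Require Import Reals.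
Open Scope R_scope.
From Stdlib Require Import Reals Lra Psatz.
From Coquelicot Require Import Coquelicot.
Open Scope R_scope.
Lemma term_nonneg (g a b : R) (k j : nat) : 0 <= g -> 0 <= a -> 0 <= b -> 0 <= g * a ^ k * b ^ j.
Proof. intros; apply Rmult_le_pos; [apply Rmult_le_pos; [assumption|apply pow_le; assumption]|apply pow_le; assumption]. Qed.

Lemma sqrt_ub (x m : R) : 0 <= x -> 0 < m -> sqrt x <= (x + m^2) / (2*m).
Proof.
  intros Hx Hm. assert (Hs := sqrt_sqrt x Hx). assert (H0 := sqrt_pos x).
  apply Rmult_le_reg_r with (2*m); [lra|].
  unfold Rdiv. rewrite Rmult_assoc, Rinv_l, Rmult_1_r by lra.
  assert (0 <= (sqrt x - m)^2) by apply pow2_ge_0. nra.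
Qed.

Lemma sqrt_lb (x m : R) : 0 <= x -> 0 < m -> 2*m*x / (x + m^2) <= sqrt x.
Proof.
  intros Hx Hm. assert (Hs := sqrt_sqrt x Hx). assert (H0 := sqrt_pos x).
  assert (Hp : 0 < x + m^2) by nra.
  apply Rmult_le_reg_r with (x + m^2); [lra|].
  unfold Rdiv. rewrite Rmult_assoc, Rinv_l, Rmult_1_r by lra.
  assert (0 <= (sqrt x - m)^2) by apply pow2_ge_0. nra.
Qed.

Lemma div_nonneg (a b : R) : 0 <= a -> 0 < b -> 0 <= a / b.
Proof. intros. unfold Rdiv. apply Rmult_le_pos; [assumption|]. left; apply Rinv_0_lt_compat; assumption. Qed.

Lemma mul_np_nn (a b : R) : a <= 0 -> 0 <= b -> a * b <= 0.
Proof. intros. assert (0 <= (-a) * b) by (apply Rmult_le_pos; lra). lra. Qed.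
Lemma mul_nn_np (a b : R) : 0 <= a -> b <= 0 -> a * b <= 0.
Proof. intros. assert (0 <= a * (-b)) by (apply Rmult_le_pos; lra). lra. Qed.

Definition alpha (x : R) : R := (3 - x) / (sqrt (x^2 + 2*x + 3) * (12*x^2 + 28*x + 33)).
Definition beta (x : R) : R := (x + 9) / (sqrt (x^2 + 2*x + 5) * (12*x^2 + 20*x + 41)).
Definition EAp (u : R) : R := 178200 + 255888*u^2 + 71536*u^4 + 3648*u^6.
Definition EBp (v : R) : R := 1570464 + 698304*v^2 + 27728*v^4 - 3648*v^6.
Definition Kd (z : R) : R := 100 + 35*z + 12*z^2.
Definition DAf (u : R) : R :=
  (3+u) * sqrt (u^2+2*u+3) * (12*u^2+28*u+33) + (3-u) * sqrt (u^2-2*u+3) * (12*u^2-28*u+33).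
Definition DBf (v : R) : R :=
  (9-v) * sqrt (v^2+2*v+5) * (12*v^2+20*v+41) + (9+v) * sqrt (v^2-2*v+5) * (12*v^2-20*v+41).
Definition KAf (u : R) : R :=
  DAf u * sqrt (u^2+2*u+3) * sqrt (u^2-2*u+3) * (12*u^2-28*u+33) * (12*u^2+28*u+33).
Definition KBf (v : R) : R :=
  DBf v * sqrt (v^2+2*v+5) * sqrt (v^2-2*v+5) * (12*v^2+20*v+41) * (12*v^2-20*v+41).

Lemma alpha_neg u : alpha (-u) = (3+u) / (sqrt (u^2 - 2*u + 3) * (12*u^2 - 28*u + 33)).
Proof.
  unfold alpha. replace ((-u)^2 + 2*(-u) + 3) with (u^2 - 2*u + 3) by ring.
  replace (12*(-u)^2 + 28*(-u) + 33) with (12*u^2 - 28*u + 33) by ring.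
  replace (3 - - u) with (3 + u) by ring. reflexivity.
Qed.

Lemma beta_neg v : beta (-v) = (9-v) / (sqrt (v^2 - 2*v + 5) * (12*v^2 - 20*v + 41)).
Proof.
  unfold beta. replace ((-v)^2 + 2*(-v) + 5) with (v^2 - 2*v + 5) by ring.
  replace (12*(-v)^2 + 20*(-v) + 41) with (12*v^2 - 20*v + 41) by ring.
  replace (-v + 9) with (9 - v) by ring. reflexivity.
Qed.

Lemma DA_pos u : 0 < u -> 0 < DAf u.
Proof.
  intro Hu. unfold DAf.
  assert (H1 : 0 < sqrt (u^2+2*u+3)) by (apply sqrt_lt_R0; nra).
  assert (H2 : 0 < sqrt (u^2-2*u+3)) by (apply sqrt_lt_R0; nra).
  assert (H12 : sqrt (u^2-2*u+3) <= sqrt (u^2+2*u+3)) by (apply sqrt_le_1_alt; nra).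
  assert (P1 : 0 < 12*u^2+28*u+33) by nra.
  assert (P2 : 0 < 12*u^2-28*u+33) by nra.
  assert (P12 : 12*u^2-28*u+33 <= 12*u^2+28*u+33) by nra.
  set (s1 := sqrt (u^2+2*u+3)) in *. set (s2 := sqrt (u^2-2*u+3)) in *.
  set (p := 12*u^2+28*u+33) in *. set (q := 12*u^2-28*u+33) in *.
  assert (s2 * q <= s1 * p) by (apply Rmult_le_compat; lra).
  assert (0 < s1 * p) by (apply Rmult_lt_0_compat; lra).
  assert (0 < s2 * q) by (apply Rmult_lt_0_compat; lra).
  destruct (Rle_dec u 3).
  - assert (0 <= (3-u) * (s2*q)) by (apply Rmult_le_pos; lra).
    assert (0 < (3+u) * (s1*p)) by (apply Rmult_lt_0_compat; lra).
    nra.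
  - assert ((u-3) * (s2*q) <= (u-3) * (s1*p)) by (apply Rmult_le_compat_l; lra).
    nra.
Qed.

Lemma DB_pos v : 0 <= v <= 9 -> 0 < DBf v.
Proof.
  intro Hv. unfold DBf.
  assert (H1 : 0 < sqrt (v^2+2*v+5)) by (apply sqrt_lt_R0; nra).
  assert (H2 : 0 < sqrt (v^2-2*v+5)) by (apply sqrt_lt_R0; nra).
  assert (P1 : 0 < 12*v^2+20*v+41) by nra.
  assert (P2 : 0 < 12*v^2-20*v+41) by nra.
  set (s1 := sqrt (v^2+2*v+5)) in *. set (s2 := sqrt (v^2-2*v+5)) in *.
  set (p := 12*v^2+20*v+41) in *. set (q := 12*v^2-20*v+41) in *.
  assert (0 <= (9-v) * s1 * p) by (apply Rmult_le_pos; [apply Rmult_le_pos|]; lra).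
  assert (0 < (9+v) * s2 * q) by (apply Rmult_lt_0_compat; [apply Rmult_lt_0_compat|]; lra).
  lra.
Qed.

Lemma KA_pos u : 0 < u -> 0 < KAf u.
Proof.
  intro Hu. unfold KAf. assert (H := DA_pos u Hu).
  assert (H1 : 0 < sqrt (u^2+2*u+3)) by (apply sqrt_lt_R0; nra).
  assert (H2 : 0 < sqrt (u^2-2*u+3)) by (apply sqrt_lt_R0; nra).
  assert (P1 : 0 < 12*u^2+28*u+33) by nra.
  assert (P2 : 0 < 12*u^2-28*u+33) by nra.
  repeat apply Rmult_lt_0_compat; assumption.
Qed.

Lemma KB_pos v : 0 <= v <= 9 -> 0 < KBf v.
Proof.
  intro Hv. unfold KBf. assert (H := DB_pos v Hv).
  assert (H1 : 0 < sqrt (v^2+2*v+5)) by (apply sqrt_lt_R0; nra).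
  assert (H2 : 0 < sqrt (v^2-2*v+5)) by (apply sqrt_lt_R0; nra).
  assert (P1 : 0 < 12*v^2+20*v+41) by nra.
  assert (P2 : 0 < 12*v^2-20*v+41) by nra.
  repeat apply Rmult_lt_0_compat; assumption.
Qed.

Lemma rat_A u : 0 < u -> alpha (-u) - alpha u = u * EAp u / KAf u.
Proof.
  intro Hu. rewrite alpha_neg. unfold alpha.
  assert (HD := DA_pos u Hu). assert (HK := KA_pos u Hu). unfold KAf in *. unfold DAf in *.
  assert (H1 : 0 < sqrt (u^2+2*u+3)) by (apply sqrt_lt_R0; nra).
  assert (H2 : 0 < sqrt (u^2-2*u+3)) by (apply sqrt_lt_R0; nra).
  assert (E1 := sqrt_sqrt (u^2+2*u+3) ltac:(nra)).
  assert (E2 := sqrt_sqrt (u^2-2*u+3) ltac:(nra)).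
  assert (P1 : 0 < 12*u^2+28*u+33) by nra.
  assert (P2 : 0 < 12*u^2-28*u+33) by nra.
  set (s1 := sqrt (u^2+2*u+3)) in *. set (s2 := sqrt (u^2-2*u+3)) in *.
  set (D := (3 + u) * s1 * (12 * u ^ 2 + 28 * u + 33) + (3 - u) * s2 * (12 * u ^ 2 - 28 * u + 33)) in *.
  assert (HN : ((3+u)*s1*(12*u^2+28*u+33) - (3-u)*s2*(12*u^2-28*u+33)) * D = u * EAp u).
  { assert (T : ((3+u)*s1*(12*u^2+28*u+33) - (3-u)*s2*(12*u^2-28*u+33)) * D - u * EAp u
      = (3+u)^2*(12*u^2+28*u+33)^2*(s1*s1 - (u^2+2*u+3)) - (3-u)^2*(12*u^2-28*u+33)^2*(s2*s2 - (u^2-2*u+3)))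
      by (unfold D, EAp; ring).
    rewrite E1, E2 in T. lra. }
  rewrite <- HN. field. repeat split; lra.
Qed.

Lemma rat_B v : 0 <= v <= 9 -> beta (-v) - beta v = v * EBp v / KBf v.
Proof.
  intro Hv. rewrite beta_neg. unfold beta.
  assert (HD := DB_pos v Hv). assert (HK := KB_pos v Hv). unfold KBf in *. unfold DBf in *.
  assert (H1 : 0 < sqrt (v^2+2*v+5)) by (apply sqrt_lt_R0; nra).
  assert (H2 : 0 < sqrt (v^2-2*v+5)) by (apply sqrt_lt_R0; nra).
  assert (E1 := sqrt_sqrt (v^2+2*v+5) ltac:(nra)).
  assert (E2 := sqrt_sqrt (v^2-2*v+5) ltac:(nra)).
  assert (P1 : 0 < 12*v^2+20*v+41) by nra.
  assert (P2 : 0 < 12*v^2-20*v+41) by nra.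
  set (s1 := sqrt (v^2+2*v+5)) in *. set (s2 := sqrt (v^2-2*v+5)) in *.
  set (D := (9 - v) * s1 * (12 * v ^ 2 + 20 * v + 41) + (9 + v) * s2 * (12 * v ^ 2 - 20 * v + 41)) in *.
  assert (HN : ((9-v)*s1*(12*v^2+20*v+41) - (9+v)*s2*(12*v^2-20*v+41)) * D = v * EBp v).
  { assert (T : ((9-v)*s1*(12*v^2+20*v+41) - (9+v)*s2*(12*v^2-20*v+41)) * D - v * EBp v
      = (9-v)^2*(12*v^2+20*v+41)^2*(s1*s1 - (v^2+2*v+5)) - (9+v)^2*(12*v^2-20*v+41)^2*(s2*s2 - (v^2-2*v+5)))
      by (unfold D, EBp; ring).
    rewrite E1, E2 in T. lra. }
  rewrite <- HN. field. repeat split; lra.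
Qed.
Definition DA1 (u : R) : R := (((((4000000000000 * ((152 + (90 * u)) ^ 2)) * ((603 + (615 * u)) ^ 2)) * ((100 + (35 * ((u ^ 2) - 2))) + (12 * (((u ^ 2) - 2) ^ 2)))) * (((178200 + (255888 * (u ^ 2))) + (71536 * (u ^ 4))) + (3648 * (u ^ 6)))) - (((((577 * ((((((3 + u) * ((10000 * (((u ^ 2) + (2 * u)) + 3)) + ((152 + (90 * u)) ^ 2))) * (((12 * (u ^ 2)) + (28 * u)) + 33)) * 1000) * (603 + (615 * u))) + (((((3 - u) * ((1000000 * (((u ^ 2) - (2 * u)) + 3)) + ((603 + (615 * u)) ^ 2))) * (((12 * (u ^ 2)) - (28 * u)) + 33)) * 100) * (152 + (90 * u))))) * ((10000 * (((u ^ 2) + (2 * u)) + 3)) + ((152 + (90 * u)) ^ 2))) * ((1000000 * (((u ^ 2) - (2 * u)) + 3)) + ((603 + (615 * u)) ^ 2))) * (((12 * (u ^ 2)) - (28 * u)) + 33)) * (((12 * (u ^ 2)) + (28 * u)) + 33))).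
Lemma PA1_nonneg (u : R) : 141 / 100 <= u <= 3 / 1 -> 0 <= DA1 u.
Proof.
  intros [H1 H2].
  assert (Ha : 0 <= 100 * u - 141) by lra.
  assert (Hb : 0 <= 300 - 100 * u) by lra.
  assert (E : 22634568563392300660960698022500000000000000000 * DA1 u = 4207011830549237418431502154081312091385502119 * (100 * u - 141) ^ 0 * (300 - 100 * u) ^ 14 + 94024127953948122031896497377333924769038304880 * (100 * u - 141) ^ 1 * (300 - 100 * u) ^ 13 + 1061488379139372963466972814486448457549786046700 * (100 * u - 141) ^ 2 * (300 - 100 * u) ^ 12 + 7858744987178091201528879039064831190259687594000 * (100 * u - 141) ^ 3 * (300 - 100 * u) ^ 11 + 41395494731424601336181567848075370595449821970000 * (100 * u - 141) ^ 4 * (300 - 100 * u) ^ 10 + 160271049079828973898871451621111941491006432400000 * (100 * u - 141) ^ 5 * (300 - 100 * u) ^ 9 + 463660678611040564677236565304293828212984069000000 * (100 * u - 141) ^ 6 * (300 - 100 * u) ^ 8 + 1011127513262959168656808025816843953155010180000000 * (100 * u - 141) ^ 7 * (300 - 100 * u) ^ 7 + 1666249180687152503492344308683788771355822000000000 * (100 * u - 141) ^ 8 * (300 - 100 * u) ^ 6 + 2065099368249512010472180714568888854955800000000000 * (100 * u - 141) ^ 9 * (300 - 100 * u) ^ 5 + 1897706768019976985992489751314146488720000000000000 * (100 * u - 141) ^ 10 * (300 - 100 * u) ^ 4 + 1256781834379858056946097124186401008000000000000000 * (100 * u - 141) ^ 11 * (300 - 100 * u) ^ 3 + 568701532673679107250801378185600000000000000000000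 * (100 * u - 141) ^ 12 * (300 - 100 * u) ^ 2 + 157934065703475581377583967744000000000000000000000 * (100 * u - 141) ^ 13 * (300 - 100 * u) ^ 1 + 20388535553934811770163200000000000000000000000000 * (100 * u - 141) ^ 14 * (300 - 100 * u) ^ 0) by (unfold DA1; ring).
  assert (P : 0 <= 4207011830549237418431502154081312091385502119 * (100 * u - 141) ^ 0 * (300 - 100 * u) ^ 14 + 94024127953948122031896497377333924769038304880 * (100 * u - 141) ^ 1 * (300 - 100 * u) ^ 13 + 1061488379139372963466972814486448457549786046700 * (100 * u - 141) ^ 2 * (300 - 100 * u) ^ 12 + 7858744987178091201528879039064831190259687594000 * (100 * u - 141) ^ 3 * (300 - 100 * u) ^ 11 + 41395494731424601336181567848075370595449821970000 * (100 * u - 141) ^ 4 * (300 - 100 * u) ^ 10 + 160271049079828973898871451621111941491006432400000 * (100 * u - 141) ^ 5 * (300 - 100 * u) ^ 9 + 463660678611040564677236565304293828212984069000000 * (100 * u - 141) ^ 6 * (300 - 100 * u) ^ 8 + 1011127513262959168656808025816843953155010180000000 * (100 * u - 141) ^ 7 * (300 - 100 * u) ^ 7 + 1666249180687152503492344308683788771355822000000000 * (100 * u - 141) ^ 8 * (300 - 100 * u) ^ 6 + 2065099368249512010472180714568888854955800000000000 * (100 * u - 141) ^ 9 * (300 - 100 * u) ^ 5 + 1897706768019976985992489751314146488720000000000000 * (100 * u - 141) ^ 10 * (300 - 100 * u) ^ 4 + 1256781834379858056946097124186401008000000000000000 * (100 * u - 141) ^ 11 * (300 - 100 * u) ^ 3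 + 568701532673679107250801378185600000000000000000000 * (100 * u - 141) ^ 12 * (300 - 100 * u) ^ 2 + 157934065703475581377583967744000000000000000000000 * (100 * u - 141) ^ 13 * (300 - 100 * u) ^ 1 + 20388535553934811770163200000000000000000000000000 * (100 * u - 141) ^ 14 * (300 - 100 * u) ^ 0) by (repeat apply Rplus_le_le_0_compat; (apply term_nonneg; [lra|exact Ha|exact Hb])).
  lra.
Qed.

Definition DA2 (u : R) : R := ((((10000 * ((88 * u) - 19)) * ((100 + (35 * ((u ^ 2) - 2))) + (12 * (((u ^ 2) - 2) ^ 2)))) * (((178200 + (255888 * (u ^ 2))) + (71536 * (u ^ 4))) + (3648 * (u ^ 6)))) - (((((577 * (3 + u)) * (((u ^ 2) + (2 * u)) + 3)) * ((((12 * (u ^ 2)) + (28 * u)) + 33) ^ 2)) * (((12 * (u ^ 2)) - (28 * u)) + 33)) * ((10000 * (((u ^ 2) - (2 * u)) + 3)) + (((88 * u) - 19) ^ 2)))).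
Lemma PA2_nonneg (u : R) : 3 / 1 <= u <= 465 / 100 -> 0 <= DA2 u.
Proof.
  intros [H1 H2].
  assert (Ha : 0 <= 100 * u - 300) by lra.
  assert (Hb : 0 <= 465 - 100 * u) by lra.
  assert (E : 2031173905033388671875000000000000 * DA2 u = 2808889987500000000000000 * (100 * u - 300) ^ 0 * (465 - 100 * u) ^ 11 + 45775249610062500000000000 * (100 * u - 300) ^ 1 * (465 - 100 * u) ^ 10 + 339088007021534375000000000 * (100 * u - 300) ^ 2 * (465 - 100 * u) ^ 9 + 1507726550711642353125000000 * (100 * u - 300) ^ 3 * (465 - 100 * u) ^ 8 + 4473072942568053363375000000 * (100 * u - 300) ^ 4 * (465 - 100 * u) ^ 7 + 9301592639717672682396250000 * (100 * u - 300) ^ 5 * (465 - 100 * u) ^ 6 + 13841149517491392248060700000 * (100 * u - 300) ^ 6 * (465 - 100 * u) ^ 5 + 14746375407491609743020307500 * (100 * u - 300) ^ 7 * (465 - 100 * u) ^ 4 + 11029765977521015079844593500 * (100 * u - 300) ^ 8 * (465 - 100 * u) ^ 3 + 5519155547400959989231917375 * (100 * u - 300) ^ 9 * (465 - 100 * u) ^ 2 + 1663757987263669838983778490 * (100 * u - 300) ^ 10 * (465 - 100 * u) ^ 1 + 229022158083615312065142606 * (100 * u - 300) ^ 11 * (465 - 100 * u) ^ 0) by (unfold DA2; ring).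
  assert (P : 0 <= 2808889987500000000000000 * (100 * u - 300) ^ 0 * (465 - 100 * u) ^ 11 + 45775249610062500000000000 * (100 * u - 300) ^ 1 * (465 - 100 * u) ^ 10 + 339088007021534375000000000 * (100 * u - 300) ^ 2 * (465 - 100 * u) ^ 9 + 1507726550711642353125000000 * (100 * u - 300) ^ 3 * (465 - 100 * u) ^ 8 + 4473072942568053363375000000 * (100 * u - 300) ^ 4 * (465 - 100 * u) ^ 7 + 9301592639717672682396250000 * (100 * u - 300) ^ 5 * (465 - 100 * u) ^ 6 + 13841149517491392248060700000 * (100 * u - 300) ^ 6 * (465 - 100 * u) ^ 5 + 14746375407491609743020307500 * (100 * u - 300) ^ 7 * (465 - 100 * u) ^ 4 + 11029765977521015079844593500 * (100 * u - 300) ^ 8 * (465 - 100 * u) ^ 3 + 5519155547400959989231917375 * (100 * u - 300) ^ 9 * (465 - 100 * u) ^ 2 + 1663757987263669838983778490 * (100 * u - 300) ^ 10 * (465 - 100 * u) ^ 1 + 229022158083615312065142606 * (100 * u - 300) ^ 11 * (465 - 100 * u) ^ 0) by (repeat apply Rplus_le_le_0_compat; (apply term_nonneg; [lra|exact Ha|exact Hb])).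
  lra.
Qed.

Definition DB (v : R) : R := ((((((((27696000 * (2236 + (800 * v))) * (12 + ((v - 1) ^ 2))) * (((v ^ 2) + (2 * v)) + 5)) * (((v ^ 2) - (2 * v)) + 5)) * (((12 * (v ^ 2)) + (20 * v)) + 41)) * (((12 * (v ^ 2)) - (20 * v)) + 41)) * (((((((9 - v) * (2236 + (800 * v))) * 1000) * (((v ^ 2) + (2 * v)) + 5)) * (((12 * (v ^ 2)) + (20 * v)) + 41)) * ((36 * (((v ^ 2) - (2 * v)) + 5)) + ((12 + ((v - 1) ^ 2)) ^ 2))) + ((((((9 + v) * (12 + ((v - 1) ^ 2))) * 6) * (((v ^ 2) - (2 * v)) + 5)) * (((12 * (v ^ 2)) - (20 * v)) + 41)) * ((1000000 * (((v ^ 2) + (2 * v)) + 5)) + ((2236 + (800 * v)) ^ 2))))) - ((((50 * ((100 + (35 * (v ^ 2))) + (12 * ((v ^ 2) ^ 2)))) * (((1570464 + (698304 * (v ^ 2))) + (27728 * (v ^ 4))) - (3648 * (v ^ 6)))) * (((1000000 * (((v ^ 2) + (2 * v)) + 5)) + ((2236 + (800 * v)) ^ 2)) ^ 2)) * (((36 * (((v ^ 2) - (2 * v)) + 5)) + ((12 + ((v - 1) ^ 2)) ^ 2)) ^ 2))).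
Lemma PB_nonneg (v : R) : 0 / 1 <= v <= 442 / 100 -> 0 <= DB v.
Proof.
  intros [H1 H2].
  assert (Ha : 0 <= 100 * v - 0) by lra.
  assert (Hb : 0 <= 442 - 100 * v) by lra.
  assert (E : 18420442926821838340801157768529705498154133868677934570312500000000000000000000000 * DB v = 2052428934369251244807243347167968750000000000000000 * (100 * v - 0) ^ 0 * (442 - 100 * v) ^ 22 + 49995977715668065944129467010498046875000000000000000 * (100 * v - 0) ^ 1 * (442 - 100 * v) ^ 21 + 726029062784625940138536163330078125000000000000000000 * (100 * v - 0) ^ 2 * (442 - 100 * v) ^ 20 + 7715362308682627891598144649295806884765625000000000000 * (100 * v - 0) ^ 3 * (442 - 100 * v) ^ 19 + 62058202278314714974965656587172012329101562500000000000 * (100 * v - 0) ^ 4 * (442 - 100 * v) ^ 18 + 389923467876743365719472728880911030578613281250000000000 * (100 * v - 0) ^ 5 * (442 - 100 * v) ^ 17 + 1972866878444128291077443795309692321243286132812500000000 * (100 * v - 0) ^ 6 * (442 - 100 * v) ^ 16 + 8263160786486166540828053632559255992247314453125000000000 * (100 * v - 0) ^ 7 * (442 - 100 * v) ^ 15 + 29318912174356670065787934464925204738165551757812500000000 * (100 * v - 0) ^ 8 * (442 - 100 * v) ^ 14 + 89847830083118064396945933344465053272634057617187500000000 * (100 * v - 0) ^ 9 * (442 - 100 * v) ^ 13 + 241366147085570096952261087018662134449484177416992187500000 * (100 * v - 0) ^ 10 * (442 - 100 * v) ^ 12 + 573918428868891188100610796979988981201139762627441406250000 * (100 * v - 0)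 ^ 11 * (442 - 100 * v) ^ 11 + 1212554259442972363042071427950914503370634936226412109375000 * (100 * v - 0) ^ 12 * (442 - 100 * v) ^ 10 + 2272591707136215636519186952855309423199404617622525976562500 * (100 * v - 0) ^ 13 * (442 - 100 * v) ^ 9 + 3754147479049278829158878590753130197663063135960008673828125 * (100 * v - 0) ^ 14 * (442 - 100 * v) ^ 8 + 5410165955186129735741388937743957346580982216050414985562500 * (100 * v - 0) ^ 15 * (442 - 100 * v) ^ 7 + 6707721381474179845201765239248313022757439409154050553148750 * (100 * v - 0) ^ 16 * (442 - 100 * v) ^ 6 + 7021889156312422396067158550048289147459257646919304220392100 * (100 * v - 0) ^ 17 * (442 - 100 * v) ^ 5 + 6050486421860136665612666722634757762623862323390041152079716 * (100 * v - 0) ^ 18 * (442 - 100 * v) ^ 4 + 4129940429151439733772557283091087263732175825671762380839728 * (100 * v - 0) ^ 19 * (442 - 100 * v) ^ 3 + 2098225025677734312002129386923829583717969679391439427260184 * (100 * v - 0) ^ 20 * (442 - 100 * v) ^ 2 + 705829667800076165697298511288112787135424300158312715856912 * (100 * v - 0) ^ 21 * (442 - 100 * v) ^ 1 + 118073155051201695059842106758563115318921344360078640102656 * (100 * v - 0) ^ 22 * (442 - 100 * v) ^ 0) by (unfold DB; ring).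
  assert (P : 0 <= 2052428934369251244807243347167968750000000000000000 * (100 * v - 0) ^ 0 * (442 - 100 * v) ^ 22 + 49995977715668065944129467010498046875000000000000000 * (100 * v - 0) ^ 1 * (442 - 100 * v) ^ 21 + 726029062784625940138536163330078125000000000000000000 * (100 * v - 0) ^ 2 * (442 - 100 * v) ^ 20 + 7715362308682627891598144649295806884765625000000000000 * (100 * v - 0) ^ 3 * (442 - 100 * v) ^ 19 + 62058202278314714974965656587172012329101562500000000000 * (100 * v - 0) ^ 4 * (442 - 100 * v) ^ 18 + 389923467876743365719472728880911030578613281250000000000 * (100 * v - 0) ^ 5 * (442 - 100 * v) ^ 17 + 1972866878444128291077443795309692321243286132812500000000 * (100 * v - 0) ^ 6 * (442 - 100 * v) ^ 16 + 8263160786486166540828053632559255992247314453125000000000 * (100 * v - 0) ^ 7 * (442 - 100 * v) ^ 15 + 29318912174356670065787934464925204738165551757812500000000 * (100 * v - 0) ^ 8 * (442 - 100 * v) ^ 14 + 89847830083118064396945933344465053272634057617187500000000 * (100 * v - 0) ^ 9 * (442 - 100 * v) ^ 13 + 241366147085570096952261087018662134449484177416992187500000 * (100 * v - 0) ^ 10 * (442 - 100 * v) ^ 12 + 573918428868891188100610796979988981201139762627441406250000 * (100 * v - 0) ^ 11 * (442 - 100 * v) ^ 11 + 1212554259442972363042071427950914503370634936226412109375000 * (100 * v - 0) ^ 12 * (442 - 100 * v) ^ 10 + 2272591707136215636519186952855309423199404617622525976562500 * (100 * v - 0) ^ 13 * (442 - 100 * v) ^ 9 + 3754147479049278829158878590753130197663063135960008673828125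 * (100 * v - 0) ^ 14 * (442 - 100 * v) ^ 8 + 5410165955186129735741388937743957346580982216050414985562500 * (100 * v - 0) ^ 15 * (442 - 100 * v) ^ 7 + 6707721381474179845201765239248313022757439409154050553148750 * (100 * v - 0) ^ 16 * (442 - 100 * v) ^ 6 + 7021889156312422396067158550048289147459257646919304220392100 * (100 * v - 0) ^ 17 * (442 - 100 * v) ^ 5 + 6050486421860136665612666722634757762623862323390041152079716 * (100 * v - 0) ^ 18 * (442 - 100 * v) ^ 4 + 4129940429151439733772557283091087263732175825671762380839728 * (100 * v - 0) ^ 19 * (442 - 100 * v) ^ 3 + 2098225025677734312002129386923829583717969679391439427260184 * (100 * v - 0) ^ 20 * (442 - 100 * v) ^ 2 + 705829667800076165697298511288112787135424300158312715856912 * (100 * v - 0) ^ 21 * (442 - 100 * v) ^ 1 + 118073155051201695059842106758563115318921344360078640102656 * (100 * v - 0) ^ 22 * (442 - 100 * v) ^ 0) by (repeat apply Rplus_le_le_0_compat; (apply term_nonneg; [lra|exact Ha|exact Hb])).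
  lra.
Qed.

Lemma boundA1 u : 141/100 <= u <= 3 -> 577 * KAf u <= 50 * Kd (u^2 - 2) * EAp u.
Proof.
  intros [Hu1 Hu2].
  assert (HP := PA1_nonneg u ltac:(split; lra)).
  set (m1 := (152 + 90*u)/100). set (m2 := (603 + 615*u)/1000).
  assert (Hm1 : 0 < m1) by (unfold m1; lra). assert (Hm2 : 0 < m2) by (unfold m2; lra).
  assert (B1 := sqrt_ub (u^2+2*u+3) m1 ltac:(nra) Hm1).
  assert (B2 := sqrt_ub (u^2-2*u+3) m2 ltac:(nra) Hm2).
  assert (H1 : 0 < sqrt (u^2+2*u+3)) by (apply sqrt_lt_R0; nra).
  assert (H2 : 0 < sqrt (u^2-2*u+3)) by (apply sqrt_lt_R0; nra).
  assert (P1 : 0 < 12*u^2+28*u+33) by nra.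
  assert (P2 : 0 < 12*u^2-28*u+33) by nra.
  assert (HD := DA_pos u ltac:(lra)).
  unfold KAf. unfold DAf in *.
  set (s1 := sqrt (u^2+2*u+3)) in *. set (s2 := sqrt (u^2-2*u+3)) in *.
  set (h1 := (u ^ 2 + 2 * u + 3 + m1 ^ 2) / (2 * m1)) in *.
  set (h2 := (u ^ 2 - 2 * u + 3 + m2 ^ 2) / (2 * m2)) in *.
  set (Pp := 12*u^2+28*u+33) in *. set (Pm := 12*u^2-28*u+33) in *.
  assert (HDh : (3+u)*s1*Pp + (3-u)*s2*Pm <= (3+u)*h1*Pp + (3-u)*h2*Pm).
  { apply Rplus_le_compat; apply Rmult_le_compat_r; try lra; apply Rmult_le_compat_l; lra. }
  assert (HK : ((3+u)*s1*Pp + (3-u)*s2*Pm) * s1 * s2 * Pm * Pp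
             <= ((3+u)*h1*Pp + (3-u)*h2*Pm) * h1 * h2 * Pm * Pp).
  { apply Rmult_le_compat_r; [lra|]. apply Rmult_le_compat_r; [lra|].
    apply Rmult_le_compat; try lra.
    - apply Rmult_le_pos; lra.
    - apply Rmult_le_compat; lra. }
  assert (E : 50 * Kd (u^2 - 2) * EAp u - 577 * (((3+u)*h1*Pp + (3-u)*h2*Pm) * h1 * h2 * Pm * Pp)
              = DA1 u / (8 * 100^2 * 1000^2 * ((152 + 90*u)^2 * (603 + 615*u)^2))).
  { unfold h1, h2, m1, m2, Pp, Pm, DA1, Kd, EAp. field. lra. }
  assert (0 <= DA1 u / (8 * 100^2 * 1000^2 * ((152 + 90*u)^2 * (603 + 615*u)^2))).
  { apply div_nonneg; [lra|]. assert (0 < 152 + 90*u) by lra. assert (0 < 603+615*u) by lra.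
    assert (0 < (152 + 90*u)^2 * (603 + 615*u)^2) by (apply Rmult_lt_0_compat; apply pow_lt; lra). lra. }
  lra.
Qed.

Lemma boundA2 u : 3 <= u <= 465/100 -> 577 * KAf u <= 50 * Kd (u^2 - 2) * EAp u.
Proof.
  intros [Hu1 Hu2].
  assert (HP := PA2_nonneg u ltac:(split; lra)).
  set (m2 := (88*u - 19)/100).
  assert (Hm2 : 0 < m2) by (unfold m2; lra).
  assert (B2 := sqrt_ub (u^2-2*u+3) m2 ltac:(nra) Hm2).
  assert (H1 : 0 < sqrt (u^2+2*u+3)) by (apply sqrt_lt_R0; nra).
  assert (H2 : 0 < sqrt (u^2-2*u+3)) by (apply sqrt_lt_R0; nra).
  assert (E1 := sqrt_sqrt (u^2+2*u+3) ltac:(nra)).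
  assert (P1 : 0 < 12*u^2+28*u+33) by nra.
  assert (P2 : 0 < 12*u^2-28*u+33) by nra.
  assert (HD := DA_pos u ltac:(lra)).
  unfold KAf. unfold DAf in *.
  set (s1 := sqrt (u^2+2*u+3)) in *. set (s2 := sqrt (u^2-2*u+3)) in *.
  set (h2 := (u ^ 2 - 2 * u + 3 + m2 ^ 2) / (2 * m2)) in *.
  set (Pp := 12*u^2+28*u+33) in *. set (Pm := 12*u^2-28*u+33) in *.
  assert (HDh : (3+u)*s1*Pp + (3-u)*s2*Pm <= (3+u)*s1*Pp).
  { assert (0 <= (u-3)*s2*Pm) by (apply Rmult_le_pos; [apply Rmult_le_pos|]; lra). lra. }
  assert (HK : ((3+u)*s1*Pp + (3-u)*s2*Pm) * s1 * s2 * Pm * Pp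
             <= ((3+u)*s1*Pp) * s1 * h2 * Pm * Pp).
  { apply Rmult_le_compat_r; [lra|]. apply Rmult_le_compat_r; [lra|].
    apply Rmult_le_compat; try lra.
    - apply Rmult_le_pos; lra.
    - apply Rmult_le_compat_r; lra. }
  assert (E0 : ((3+u)*s1*Pp) * s1 * h2 * Pm * Pp = (3+u) * (u^2+2*u+3) * Pp^2 * Pm * h2).
  { rewrite <- E1. ring. }
  assert (E : 50 * Kd (u^2 - 2) * EAp u - 577 * ((3+u) * (u^2+2*u+3) * Pp^2 * Pm * h2)
              = DA2 u / (2 * 100 * (88*u - 19))).
  { unfold h2, m2, Pp, Pm, DA2, Kd, EAp. field. lra. }
  assert (0 <= DA2 u / (2 * 100 * (88*u - 19))) by (apply div_nonneg; lra).
  lra.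
Qed.

Lemma boundB v : 0 <= v <= 442/100 -> 50 * Kd (v^2) * EBp v <= 577 * KBf v.
Proof.
  intros [Hv1 Hv2].
  assert (HP := PB_nonneg v ltac:(split; lra)).
  set (m3 := (2236 + 800*v)/1000). set (m4 := (12 + (v-1)^2)/6).
  assert (Hm3 : 0 < m3) by (unfold m3; lra). assert (Hm4 : 0 < m4) by (unfold m4; nra).
  assert (B3 := sqrt_lb (v^2+2*v+5) m3 ltac:(nra) Hm3).
  assert (B4 := sqrt_lb (v^2-2*v+5) m4 ltac:(nra) Hm4).
  assert (L3 : 0 <= 2 * m3 * (v^2+2*v+5) / (v^2+2*v+5 + m3^2)).
  { apply div_nonneg; [apply Rmult_le_pos; [lra|nra] | nra]. }
  assert (L4 : 0 <= 2 * m4 * (v^2-2*v+5) / (v^2-2*v+5 + m4^2)).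
  { apply div_nonneg; [apply Rmult_le_pos; [lra|nra] | nra]. }
  assert (P1 : 0 < 12*v^2+20*v+41) by nra.
  assert (P2 : 0 < 12*v^2-20*v+41) by nra.
  unfold KBf, DBf.
  set (s3 := sqrt (v^2+2*v+5)) in *. set (s4 := sqrt (v^2-2*v+5)) in *.
  set (l3 := 2 * m3 * (v^2+2*v+5) / (v^2+2*v+5 + m3^2)) in *.
  set (l4 := 2 * m4 * (v^2-2*v+5) / (v^2-2*v+5 + m4^2)) in *.
  set (Qp := 12*v^2+20*v+41) in *. set (Qm := 12*v^2-20*v+41) in *.
  assert (HDl : (9-v)*l3*Qp + (9+v)*l4*Qm <= (9-v)*s3*Qp + (9+v)*s4*Qm).
  { apply Rplus_le_compat; apply Rmult_le_compat_r; try lra; apply Rmult_le_compat_l; lra. }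
  assert (HDl0 : 0 <= (9-v)*l3*Qp + (9+v)*l4*Qm).
  { apply Rplus_le_le_0_compat; apply Rmult_le_pos; try lra; apply Rmult_le_pos; lra. }
  assert (HK : ((9-v)*l3*Qp + (9+v)*l4*Qm) * l3 * l4 * Qp * Qm
             <= ((9-v)*s3*Qp + (9+v)*s4*Qm) * s3 * s4 * Qp * Qm).
  { apply Rmult_le_compat_r; [lra|]. apply Rmult_le_compat_r; [lra|].
    apply Rmult_le_compat; try lra.
    - apply Rmult_le_pos; lra.
    - apply Rmult_le_compat; lra. }
  assert (N3 : 0 < 1000000 * (v^2+2*v+5) + (2236 + 800*v)^2) by nra.
  assert (N4 : 0 < 36 * (v^2-2*v+5) + (12 + (v-1)^2)^2) by nra.
  assert (E : 577 * (((9-v)*l3*Qp + (9+v)*l4*Qm) * l3 * l4 * Qp * Qm) - 50 * Kd (v^2) * EBp v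
              = DB v / ((1000000 * (v^2+2*v+5) + (2236 + 800*v)^2)^2 * (36 * (v^2-2*v+5) + (12 + (v-1)^2)^2)^2)).
  { unfold l3, l4, m3, m4, Qp, Qm, DB, Kd, EBp. field. split; lra. }
  assert (0 <= DB v / ((1000000 * (v^2+2*v+5) + (2236 + 800*v)^2)^2 * (36 * (v^2-2*v+5) + (12 + (v-1)^2)^2)^2)).
  { apply div_nonneg; [lra|]. apply Rmult_lt_0_compat; apply pow_lt; lra. }
  lra.
Qed.

Lemma frac_le (a b c d : R) : 0 < b -> 0 < d -> a * d <= c * b -> a / b <= c / d.
Proof.
  intros Hb Hd H. unfold Rdiv.
  apply Rmult_le_reg_r with (b * d); [apply Rmult_lt_0_compat; assumption|].
  replace (a * / b * (b * d)) with (a * d) by (field; lra).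
  replace (c * / d * (b * d)) with (c * b) by (field; lra). exact H.
Qed.

Lemma EBp_small v : 0 <= v -> 0 < EBp v -> v <= 442/100.
Proof.
  intros Hv HE. destruct (Rle_dec v (442/100)) as [|Hn]; [assumption|exfalso].
  assert (Hz : 195/10 <= v^2) by nra.
  unfold EBp in HE.
  set (t := v^2 - 195/10) in *.
  assert (Ht : 0 <= t) by (unfold t; lra).
  replace (1570464 + 698304 * v ^ 2 + 27728 * v ^ 4 - 3648 * v ^ 6)
    with (1570464 + 698304 * (t + 195/10) + 27728 * (t + 195/10)^2 - 3648 * (t + 195/10)^3) in HE
    by (unfold t; ring).
  assert (0 <= t^2) by nra. assert (0 <= t^3) by (apply pow_le; lra).
  nra.
Qed.

Lemma core u v : 0 <= v -> 0 < u -> u^2 = v^2 + 2 -> u * (beta (-v) - beta v) <= v * (alpha (-u) - alpha u).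
Proof.
  intros Hv Hu Huv.
  rewrite (rat_A u Hu).
  assert (HKA := KA_pos u Hu).
  assert (HEA : 0 < EAp u) by (unfold EAp; nra).
  assert (HTA : 0 <= u * EAp u / KAf u) by (apply div_nonneg; [nra|lra]).
  assert (HR : 0 <= v * (u * EAp u / KAf u)) by (apply Rmult_le_pos; lra).
  destruct (Rle_dec v 9) as [Hv9|Hv9].
  - rewrite (rat_B v (conj Hv Hv9)).
    assert (HKB := KB_pos v (conj Hv Hv9)).
    destruct (Rle_dec (EBp v) 0) as [HE|HE].
    + assert (v * EBp v / KBf v <= 0).
      { unfold Rdiv. apply mul_np_nn. - apply mul_nn_np; lra.
        - left; apply Rinv_0_lt_compat; lra. }
      assert (u * (v * EBp v / KBf v) <= 0) by (apply mul_nn_np; lra). lra.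
    + assert (HE' : 0 < EBp v) by lra.
      assert (Hv4 := EBp_small v Hv HE').
      assert (Hk : 0 < Kd (v^2)) by (unfold Kd; nra).
      assert (HB := boundB v (conj Hv Hv4)).
      assert (HA : 577 * KAf u <= 50 * Kd (v^2) * EAp u).
      { replace (v^2) with (u^2 - 2) by lra.
        destruct (Rle_dec u 3).
        - apply boundA1. split; [nra|lra].
        - apply boundA2. split; [lra|nra]. }
      assert (X1 : EBp v / KBf v <= 577 / (50 * Kd (v^2))).
      { apply frac_le; try lra. }
      assert (X2 : 577 / (50 * Kd (v^2)) <= EAp u / KAf u).
      { apply frac_le; try lra. }
      replace (u * (v * EBp v / KBf v)) with ((u * v) * (EBp v / KBf v)) by (field; lra).
      replace (v * (u * EAp u / KAf u)) with ((u * v) * (EAp u / KAf u)) by (field; lra).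
      apply Rmult_le_compat_l; [nra|lra].
  - assert (beta (-v) <= 0).
    { rewrite beta_neg. unfold Rdiv. apply mul_np_nn; [lra|].
      left; apply Rinv_0_lt_compat. apply Rmult_lt_0_compat; [apply sqrt_lt_R0|]; nra. }
    assert (0 <= beta v).
    { unfold beta. apply div_nonneg; [lra|].
      apply Rmult_lt_0_compat; [apply sqrt_lt_R0|]; nra. }
    assert (u * (beta (-v) - beta v) <= 0) by (apply mul_nn_np; lra).
    lra.
Qed.

Definition F1 (u : R) : R := atan ((3 + 2*u) / sqrt (8 * (u^2 + 2*u + 3))).
Definition F2 (v : R) : R := atan ((1 + 2*v) / sqrt (8 * (v^2 + 2*v + 5))).

Lemma F1_deriv u : is_derive F1 u (8 * (3 - u) / (sqrt (8 * (u^2 + 2*u + 3)) * (12*u^2 + 28*u + 33))).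
Proof.
  unfold F1.
  assert (hx : 0 < u^2 + 2*u + 3) by nra.
  auto_derive.
  - split; [lra|split; [apply Rgt_not_eq, sqrt_lt_R0; lra|exact I]].
  - replace (u * (u * 1)) with (u^2) by ring.
    assert (HS : sqrt (8 * (u^2 + 2*u + 3)) * sqrt (8 * (u^2 + 2*u + 3)) = 8 * (u^2 + 2*u + 3)) by (apply sqrt_sqrt; lra).
    assert (HP : 0 < sqrt (8 * (u^2 + 2*u + 3))) by (apply sqrt_lt_R0; lra).
    set (S := sqrt (8 * (u^2 + 2*u + 3))) in *.
    assert (H2 : 0 < 12*u^2+28*u+33) by nra.
    field_simplify.
    + replace (S^2) with (8 * (u^2 + 2*u + 3)) by (rewrite <- HS; ring).
      replace (S^3) with (S * (8 * (u^2 + 2*u + 3))) by (rewrite <- HS; ring).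
      field. split; nra.
    + split; lra.
    + split; nra.
Qed.

Lemma F2_deriv v : is_derive F2 v (8 * (v + 9) / (sqrt (8 * (v^2 + 2*v + 5)) * (12*v^2 + 20*v + 41))).
Proof.
  unfold F2.
  assert (hx : 0 < v^2 + 2*v + 5) by nra.
  auto_derive.
  - split; [lra|split; [apply Rgt_not_eq, sqrt_lt_R0; lra|exact I]].
  - replace (v * (v * 1)) with (v^2) by ring.
    assert (HS : sqrt (8 * (v^2 + 2*v + 5)) * sqrt (8 * (v^2 + 2*v + 5)) = 8 * (v^2 + 2*v + 5)) by (apply sqrt_sqrt; lra).
    assert (HP : 0 < sqrt (8 * (v^2 + 2*v + 5))) by (apply sqrt_lt_R0; lra).
    set (S := sqrt (8 * (v^2 + 2*v + 5))) in *.
    assert (H2 : 0 < 12*v^2+20*v+41) by nra.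
    field_simplify.
    + replace (S^2) with (8 * (v^2 + 2*v + 5)) by (rewrite <- HS; ring).
      replace (S^3) with (S * (8 * (v^2 + 2*v + 5))) by (rewrite <- HS; ring).
      field. split; nra.
    + split; lra.
    + split; nra.
Qed.

Definition Ul (l : R) : R := (l + / l) * sqrt 2 / 2.
Definition Vl (l : R) : R := (l - / l) * sqrt 2 / 2.
Definition F1d (u : R) : R := 8 * (3 - u) / (sqrt (8 * (u^2 + 2*u + 3)) * (12*u^2 + 28*u + 33)).
Definition F2d (v : R) : R := 8 * (v + 9) / (sqrt (8 * (v^2 + 2*v + 5)) * (12*v^2 + 20*v + 41)).
Definition G (l : R) : R := F1 (Ul l) + F1 (- Ul l) - F2 (Vl l) - F2 (- Vl l).
Definition Gd (l : R) : R :=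
  (Vl l / l) * F1d (Ul l) - (Vl l / l) * F1d (- Ul l) - (Ul l / l) * F2d (Vl l) + (Ul l / l) * F2d (- Vl l).

Lemma Ul_deriv l : 0 < l -> is_derive Ul l (Vl l / l).
Proof. intro Hl. unfold Ul, Vl. auto_derive; [lra|]. field. lra. Qed.
Lemma Vl_deriv l : 0 < l -> is_derive Vl l (Ul l / l).
Proof. intro Hl. unfold Ul, Vl. auto_derive; [lra|]. field. lra. Qed.

Lemma comp_deriv (f g : R -> R) (x df dg : R) :
  is_derive f (g x) df -> is_derive g x dg -> is_derive (fun y => f (g y)) x (dg * df).
Proof. intros H1 H2. exact (is_derive_comp f g x df dg H1 H2). Qed.

Lemma G_deriv l : 0 < l -> is_derive G l (Gd l).
Proof.
  intro Hl.
  assert (D1 := comp_deriv F1 Ul l _ _ (F1_deriv (Ul l)) (Ul_deriv l Hl)).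
  assert (Hn : is_derive (fun y => - Ul y) l (- (Vl l / l))).
  { apply (is_derive_opp Ul l (Vl l / l)). apply Ul_deriv; exact Hl. }
  assert (D2 := comp_deriv F1 (fun y => - Ul y) l _ _ (F1_deriv (- Ul l)) Hn).
  assert (D3 := comp_deriv F2 Vl l _ _ (F2_deriv (Vl l)) (Vl_deriv l Hl)).
  assert (Hm : is_derive (fun y => - Vl y) l (- (Ul l / l))).
  { apply (is_derive_opp Vl l (Ul l / l)). apply Vl_deriv; exact Hl. }
  assert (D4 := comp_deriv F2 (fun y => - Vl y) l _ _ (F2_deriv (- Vl l)) Hm).
  unfold G.
  assert (H := is_derive_minus _ _ l _ _ (is_derive_minus _ _ l _ _ (is_derive_plus _ _ l _ _ D1 D2) D3) D4).
  match type of H with is_derive _ _ ?d => replace (Gd l) with d end.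
  - eapply is_derive_ext; [|exact H]. intro t; reflexivity.
  - unfold Gd, F1d, F2d, minus, plus, opp. simpl. ring.
Qed.

Lemma F1d_alpha x : F1d x = 8 / sqrt 8 * alpha x.
Proof.
  unfold F1d, alpha.
  assert (hq : 0 < x^2 + 2*x + 3) by nra. assert (hp : 0 < 12*x^2+28*x+33) by nra.
  rewrite sqrt_mult by lra.
  assert (0 < sqrt 8) by (apply sqrt_lt_R0; lra). assert (0 < sqrt (x^2+2*x+3)) by (apply sqrt_lt_R0; lra).
  field. repeat split; lra.
Qed.

Lemma F2d_beta x : F2d x = 8 / sqrt 8 * beta x.
Proof.
  unfold F2d, beta.
  assert (hq : 0 < x^2 + 2*x + 5) by nra. assert (hp : 0 < 12*x^2+20*x+41) by nra.
  rewrite sqrt_mult by lra.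
  assert (0 < sqrt 8) by (apply sqrt_lt_R0; lra). assert (0 < sqrt (x^2+2*x+5)) by (apply sqrt_lt_R0; lra).
  field. repeat split; lra.
Qed.

Lemma UV_facts l : 1 <= l -> 0 <= Vl l /\ 0 < Ul l /\ Ul l ^ 2 = Vl l ^ 2 + 2.
Proof.
  intro Hl. assert (Hs : sqrt 2 * sqrt 2 = 2) by (apply sqrt_sqrt; lra).
  assert (Hs0 : 0 < sqrt 2) by (apply sqrt_lt_R0; lra).
  assert (Hi : 0 < / l <= 1).
  { split. apply Rinv_0_lt_compat; lra. rewrite <- Rinv_1. apply Rinv_le_contravar; lra. }
  unfold Ul, Vl. repeat split.
  - apply div_nonneg; [apply Rmult_le_pos; lra | lra].
  - apply Rdiv_pos_pos; [apply Rmult_lt_0_compat; lra | lra].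
  - assert (E : ((l + / l) * sqrt 2 / 2) ^ 2 - (((l - / l) * sqrt 2 / 2) ^ 2 + 2)
              = (l * / l - 1) * (sqrt 2 * sqrt 2) + (sqrt 2 * sqrt 2 - 2)) by (field; lra).
    rewrite Hs, Rinv_r in E by lra. lra.
Qed.

Lemma Gd_nonpos l : 1 <= l -> Gd l <= 0.
Proof.
  intro Hl. destruct (UV_facts l Hl) as [HV [HU HUV]].
  assert (C := core (Ul l) (Vl l) HV HU HUV).
  unfold Gd. rewrite !F1d_alpha, !F2d_beta.
  assert (H8 : 0 < sqrt 8) by (apply sqrt_lt_R0; lra).
  assert (Hk : 0 < 8 / sqrt 8) by (apply Rdiv_pos_pos; lra).
  assert (E : Vl l / l * (8 / sqrt 8 * alpha (Ul l)) - Vl l / l * (8 / sqrt 8 * alpha (- Ul l)) -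
     Ul l / l * (8 / sqrt 8 * beta (Vl l)) + Ul l / l * (8 / sqrt 8 * beta (- Vl l))
     = (8 / sqrt 8 / l) * (Ul l * (beta (- Vl l) - beta (Vl l)) - Vl l * (alpha (- Ul l) - alpha (Ul l))))
    by (field; split; lra).
  rewrite E. apply mul_nn_np; [|lra].
  left. apply Rdiv_pos_pos; lra.
Qed.

Lemma G_le l : 1 <= l -> G l <= G 1.
Proof.
  intro Hl. destruct (Req_dec l 1) as [->|Hne]; [lra|].
  assert (Hl' : 1 < l) by lra.
  destruct (MVT_gen G 1 l Gd) as [c [Hc E]].
  - intros x Hx. rewrite Rmin_left, Rmax_right in Hx by lra. apply G_deriv; lra.
  - intros x Hx. rewrite Rmin_left, Rmax_right in Hx by lra.
    apply continuity_pt_filterlim.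
    apply (ex_derive_continuous (K := R_AbsRing) (V := R_NormedModule) G x).
    exists (Gd x). apply G_deriv; lra.
  - rewrite Rmin_left, Rmax_right in Hc by lra.
    assert (Gd c <= 0) by (apply Gd_nonpos; lra).
    assert (Gd c * (l - 1) <= 0) by (apply mul_np_nn; lra).
    lra.
Qed.

Lemma solidF_eq (y z N Q : R) : 0 < Q -> y*z = N/4 -> 1^2 + y^2 + z^2 = Q/2 ->
  solidF 1 y z = atan (N / sqrt (8*Q)).
Proof.
  intros HQ H1 H2. unfold solidF. f_equal. rewrite H1, H2.
  replace (8*Q) with (4^2 * (Q/2)) by field.
  rewrite sqrt_mult by nra. rewrite sqrt_pow2 by lra.
  assert (0 < sqrt (Q/2)) by (apply sqrt_lt_R0; lra).
  field. lra.
Qed.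

Lemma eq_by (a b k s : R) : s*s = 2 -> a - b = k*(s*s - 2) -> a = b.
Proof. intros H E. rewrite H in E. lra. Qed.

Lemma Omega_G l : 0 < l -> Omega l = G l.
Proof.
  intro Hl. unfold Omega, solid_angle_rect, r0, G.
  assert (Hs : sqrt 2 * sqrt 2 = 2) by (apply sqrt_sqrt; lra).
  assert (Hs0 : 0 < sqrt 2) by (apply sqrt_lt_R0; lra).
  assert (E : 1 / sqrt 2 = sqrt 2 / 2).
  { apply (eq_by _ _ (- / (2 * sqrt 2)) (sqrt 2) Hs). field. lra. }
  rewrite E.
  rewrite (solidF_eq (sqrt 2/2 + l/2) (sqrt 2/2 + 1/(2*l)) (3 + 2*Ul l) ((Ul l)^2 + 2*Ul l + 3)).
  2: nra.
  2: { apply (eq_by _ _ (1/4) (sqrt 2) Hs). unfold Ul. field. lra. }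
  2: { apply (eq_by _ _ ((2 - l^2 - /l^2)/8) (sqrt 2) Hs). unfold Ul. field. lra. }
  rewrite (solidF_eq (sqrt 2/2 - l/2) (sqrt 2/2 - 1/(2*l)) (3 + 2*(-Ul l)) ((-Ul l)^2 + 2*(-Ul l) + 3)).
  2: nra.
  2: { apply (eq_by _ _ (1/4) (sqrt 2) Hs). unfold Ul. field. lra. }
  2: { apply (eq_by _ _ ((2 - l^2 - /l^2)/8) (sqrt 2) Hs). unfold Ul. field. lra. }
  rewrite (solidF_eq (sqrt 2/2 - l/2) (sqrt 2/2 + 1/(2*l)) (1 + 2*(-Vl l)) ((-Vl l)^2 + 2*(-Vl l) + 5)).
  2: nra.
  2: { apply (eq_by _ _ (1/4) (sqrt 2) Hs). unfold Vl. field. lra. }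
  2: { apply (eq_by _ _ ((6 - l^2 - /l^2)/8) (sqrt 2) Hs). unfold Vl. field. lra. }
  rewrite (solidF_eq (sqrt 2/2 + l/2) (sqrt 2/2 - 1/(2*l)) (1 + 2*(Vl l)) ((Vl l)^2 + 2*(Vl l) + 5)).
  2: nra.
  2: { apply (eq_by _ _ (1/4) (sqrt 2) Hs). unfold Vl. field. lra. }
  2: { apply (eq_by _ _ ((6 - l^2 - /l^2)/8) (sqrt 2) Hs). unfold Vl. field. lra. }
  unfold F1, F2. ring.
Qed.

Theorem mainTheorem3 : forall l : R, 1 <= l -> Omega l <= Omega 1.
Proof.
  intros l Hl. rewrite (Omega_G l) by lra. rewrite (Omega_G 1) by lra.
  apply G_le. exact Hl.
Qed.
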